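(* Let $n\ge1$. For every function $f(t)=\sum_{j=1}^na_je^{\lambda_jt}$ with $a_j,\lambda_j\in\mathbb{C}$ and $\mathrm{Re}(\lambda_j)<0$ for all $j$, $$\|f'\|_{L_2[0,\infty)} \le \left(\frac12+\max_{1\le j\le n}\left|\lambda_j+\frac12\right| + 2\left(\sum_{j=1}^n\mathrm{Re}(\lambda_j)\sum_{k=j+1}^n\mathrm{Re}(\lambda_k)\right)^{1/2}\right)\|f\|_{L_2[0,\infty)}.$$
   Context: $\|g\|_{L_2[0,\infty)}:=(\int_0^\infty|g(t)|^2dt)^{1/2}$. *)

(* Defs.v *)
From Stdlib Require Import Reals.
Open Scope R_scope.

Fixpoint rsum (n : nat) (g : nat -> R) : R :=
  match n with O => 0 | S m => rsum m g + g m end.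

(* rmax n g = max (g 0, ..., g (n-1)), with value 0 for n = 0 *)
Fixpoint rmax (n : nat) (g : nat -> R) : R :=
  match n with O => 0 | S O => g O | S m => Rmax (rmax m g) (g m) end.

Definition cmod (x y : R) : R := sqrt (x * x + y * y).

(* f(t) = sum_{j<n} a_j e^{lambda_j t}, a_j = ar j + i ai j,
   lambda_j = lr j + i li j.  Real and imaginary parts: *)
Definition expsum_re (n : nat) (ar ai lr li : nat -> R) (t : R) : R :=
  rsum n (fun j => exp (lr j * t) * (ar j * cos (li j * t) - ai j * sin (li j * t))).
Definition expsum_im (n : nat) (ar ai lr li : nat -> R) (t : R) : R :=
  rsum n (fun j => exp (lr j * t) * (ar j * sin (li j * t) + ai j * cos (li j * t))).

Definition improper_int_0_inf (g : R -> R) (I : R) : Prop :=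
  (forall T, 0 <= T -> inhabited (Riemann_integrable g 0 T)) /\
  (forall eps, eps > 0 -> exists M, forall T (pr : Riemann_integrable g 0 T),
       M <= T -> Rabs (RiemannInt pr - I) < eps).

Definition L2norm_0_inf (hr hi : R -> R) (N : R) : Prop :=
  exists I, improper_int_0_inf (fun t => hr t * hr t + hi t * hi t) I /\ N = sqrt I.

(* Main.v *)
Require Import Defs.
From Stdlib Require Import Reals.
Open Scope R_scope.
From Stdlib Require Import Lra Lia Psatz FunctionalExtensionality.
From Coquelicot Require Import Coquelicot.
Open Scope R_scope.

Fixpoint csum (n:nat) (g : nat -> C) : C :=
  match n with O => 0%C | S m => (csum m g + g m)%C end.

Lemma csum_ext n (f g : nat -> C) : (forall j, (j < n)%nat -> f j = g j) -> csum n f = csum n g.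
Proof. induction n; simpl; intros H; auto. rewrite IHn by (intros; apply H; lia). rewrite H by lia. auto. Qed.

Lemma csum_add n (f g : nat -> C) : csum n (fun j => f j + g j)%C = (csum n f + csum n g)%C.
Proof. induction n; simpl. ring. rewrite IHn. ring. Qed.

Lemma csum_mull n (c : C) (f : nat -> C) : (c * csum n f)%C = csum n (fun j => c * f j)%C.
Proof. induction n; simpl. ring. rewrite <- IHn. ring. Qed.

Lemma csum_mulr n (c : C) (f : nat -> C) : (csum n f * c)%C = csum n (fun j => f j * c)%C.
Proof. induction n; simpl. ring. rewrite <- IHn. ring. Qed.

Lemma csum_conj n (f : nat -> C) : Cconj (csum n f) = csum n (fun j => Cconj (f j)).
Proof. induction n; simpl. apply injective_projections; simpl; lra. rewrite Cplus_conj, IHn. auto. Qed.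

Lemma csum_zero n (f : nat -> C) : (forall j, (j < n)%nat -> f j = 0%C) -> csum n f = 0%C.
Proof. induction n; simpl; intros H; auto. rewrite IHn by (intros; apply H; lia). rewrite H by lia. ring. Qed.

Lemma csum_re n (f : nat -> C) : Re (csum n f) = rsum n (fun j => Re (f j)).
Proof. induction n; simpl; auto. rewrite <- IHn. reflexivity. Qed.

Lemma csum_swap n m (f : nat -> nat -> C) : csum n (fun j => csum m (fun k => f j k)) = csum m (fun k => csum n (fun j => f j k)).
Proof. induction n; simpl. symmetry; apply csum_zero; auto. rewrite IHn. rewrite <- csum_add. auto. Qed.


Definition gk (lam : nat -> C) j k : C := (- / (lam j + Cconj (lam k)))%C.
Definition Qf n lam (a b : nat -> C) : C :=
  csum n (fun j => csum n (fun k => a j * Cconj (b k) * gk lam j k))%C.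
Definition NQ n lam a := Re (Qf n lam a a).
Definition Dv (lam : nat -> C) (a : nat -> C) := fun j => (lam j * a j)%C.
Definition vadd (a b : nat -> C) := fun j => (a j + b j)%C.
Definition vsc (c : C) (a : nat -> C) := fun j => (c * a j)%C.
Definition vsub (a b : nat -> C) := fun j => (a j - b j)%C.
Definition inV n k (a:nat->C) := forall j, (k <= j < n)%nat -> a j = 0%C.
Definition negre n (lam : nat -> C) := forall j, (j < n)%nat -> Re (lam j) < 0.

Lemma sum_ne0 n lam j k : negre n lam -> (j < n)%nat -> (k < n)%nat -> (lam j + Cconj (lam k))%C <> 0%C.
Proof. intros H hj hk E. apply (f_equal Re) in E. unfold Re in E; simpl in E.
 generalize (H j hj) (H k hk). unfold Re. lra. Qed.

Lemma gk_conj n lam j k : negre n lam -> (j < n)%nat -> (k < n)%nat -> Cconj (gk lam j k) = gk lam k j.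
Proof. intros H hj hk. unfold gk. rewrite Copp_conj, Cinv_conj by (apply (sum_ne0 n); auto).
 rewrite Cplus_conj, Cconj_conj. f_equal. f_equal. ring. Qed.

Lemma Q_addl n lam a a' b : Qf n lam (vadd a a') b = (Qf n lam a b + Qf n lam a' b)%C.
Proof. unfold Qf, vadd. rewrite <- csum_add. apply csum_ext; intros. rewrite <- csum_add. apply csum_ext; intros. ring. Qed.
Lemma Q_addr n lam a b b' : Qf n lam a (vadd b b') = (Qf n lam a b + Qf n lam a b')%C.
Proof. unfold Qf, vadd. rewrite <- csum_add. apply csum_ext; intros. rewrite <- csum_add. apply csum_ext; intros. rewrite Cplus_conj. ring. Qed.
Lemma Q_subl n lam a a' b : Qf n lam (vsub a a') b = (Qf n lam a b - Qf n lam a' b)%C.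
Proof. unfold Qf, vsub. unfold Cminus. replace (- _)%C with ((-1) * (Qf n lam a' b))%C by (unfold Qf; ring).
 unfold Qf. rewrite csum_mull, <- csum_add. apply csum_ext; intros. rewrite csum_mull, <- csum_add. apply csum_ext; intros. ring. Qed.
Lemma Q_subr n lam a b b' : Qf n lam a (vsub b b') = (Qf n lam a b - Qf n lam a b')%C.
Proof. unfold Qf, vsub. unfold Cminus. replace (- _)%C with ((-1) * (Qf n lam a b'))%C by (unfold Qf; ring).
 unfold Qf. rewrite csum_mull, <- csum_add. apply csum_ext; intros. rewrite csum_mull, <- csum_add. apply csum_ext; intros. rewrite Cplus_conj, Copp_conj. ring. Qed.
Lemma Q_scl n lam c a b : Qf n lam (vsc c a) b = (c * Qf n lam a b)%C.
Proof. unfold Qf, vsc. rewrite csum_mull. apply csum_ext; intros. rewrite csum_mull. apply csum_ext; intros. ring. Qed.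
Lemma Q_scr n lam c a b : Qf n lam a (vsc c b) = (Cconj c * Qf n lam a b)%C.
Proof. unfold Qf, vsc. rewrite csum_mull. apply csum_ext; intros. rewrite csum_mull. apply csum_ext; intros. rewrite Cmult_conj. ring. Qed.

Lemma Q_herm n lam a b : negre n lam -> Qf n lam b a = Cconj (Qf n lam a b).
Proof. intros H. unfold Qf. rewrite csum_conj. rewrite csum_swap. apply csum_ext; intros k hk.
 rewrite csum_conj. apply csum_ext; intros j hj. rewrite !Cmult_conj, Cconj_conj.
 rewrite (gk_conj n) by auto. ring. Qed.

Lemma Q_extl n lam a a' b : (forall j, (j < n)%nat -> a j = a' j) -> Qf n lam a b = Qf n lam a' b.
Proof. intros H. unfold Qf. apply csum_ext; intros. rewrite H by auto. auto. Qed.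
Lemma Q_extr n lam a b b' : (forall j, (j < n)%nat -> b j = b' j) -> Qf n lam a b = Qf n lam a b'.
Proof. intros H. unfold Qf. apply csum_ext; intros. apply csum_ext; intros. rewrite H by auto. auto. Qed.

Lemma Q_zerol n lam a b : inV n 0 a -> Qf n lam a b = 0%C.
Proof. intros H. unfold Qf. apply csum_zero; intros. apply csum_zero; intros. rewrite H by lia. ring. Qed.

Lemma H2 n lam a b : negre n lam ->
  (Qf n lam (Dv lam a) b + Qf n lam a (Dv lam b))%C = (- (csum n a * Cconj (csum n b)))%C.
Proof. intros H. unfold Qf, Dv. rewrite <- csum_add. rewrite csum_mulr.
 replace (- _)%C with ((-1) * csum n (fun j => a j * Cconj (csum n b)))%C by ring.
 rewrite csum_mull. apply csum_ext; intros j hj. rewrite <- csum_add.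
 rewrite csum_conj, csum_mull, csum_mull. apply csum_ext; intros k hk.
 rewrite Cmult_conj. unfold gk.
 assert (Hn := sum_ne0 n lam j k H hj hk).
 field. auto. Qed.

Lemma Q_im n lam a : negre n lam -> Im (Qf n lam a a) = 0.
Proof. intros H. assert (E := Q_herm n lam a a H). apply (f_equal Im) in E.
 rewrite im_conj in E. lra. Qed.

Lemma Q_diag n lam a : negre n lam -> Qf n lam a a = RtoC (NQ n lam a).
Proof. intros H. unfold NQ. apply injective_projections; simpl; auto. apply Q_im; auto. Qed.


Definition psd n lam := forall a, 0 <= NQ n lam a.

Lemma Re_RtoC_mult (x : R) (z : C) : Re (RtoC x * z)%C = x * Re z.
Proof. unfold Re; simpl. ring. Qed.

Lemma NQ_add n lam a b : negre n lam ->
  NQ n lam (vadd a b) = NQ n lam a + NQ n lam b + 2 * Re (Qf n lam a b).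
Proof. intros H. unfold NQ. rewrite Q_addl, !Q_addr. rewrite (Q_herm n lam a b H).
 unfold Re; simpl. ring. Qed.

Lemma NQ_sc n lam c a : negre n lam -> NQ n lam (vsc c a) = Cmod c ^ 2 * NQ n lam a.
Proof. intros H. unfold NQ at 1. rewrite Q_scl, Q_scr. rewrite Cmult_assoc.
 rewrite <- Cmod2_conj. rewrite (Q_diag n lam a H). unfold Re; simpl. ring. Qed.

Lemma Cmod_sq_re (z : C) : Cmod z ^ 2 = Re (Cconj z * z)%C.
Proof. rewrite Cmod2_alt. unfold Re, Im, Cconj; simpl. ring. Qed.

Lemma conj_aux (t : R) (z : C) : (Cconj (- RtoC t * z) * z)%C = (RtoC (-t) * (Cconj z * z))%C.
Proof. destruct z as [x y]. apply injective_projections; unfold Cconj, Cmult, Copp, RtoC; simpl; ring. Qed.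

Lemma null_orth n lam a b : negre n lam -> psd n lam -> NQ n lam b = 0 -> Qf n lam a b = 0%C.
Proof. intros H P Nb. set (z := Qf n lam a b).
 assert (Hall : forall t, 0 <= NQ n lam a - 2 * t * Cmod z ^ 2).
 { intros t. generalize (P (vadd a (vsc (- RtoC t * z)%C b))).
   rewrite NQ_add, NQ_sc by auto. rewrite Nb, Rmult_0_r, Q_scr.
   fold z. rewrite (Cmod_sq_re z).
   replace (Cconj (- RtoC t * z) * z)%C with (RtoC (-t) * (Cconj z * z))%C by (symmetry; apply conj_aux).
   rewrite Re_RtoC_mult. lra. }
 destruct (Req_dec (Cmod z) 0) as [E|E]. apply Cmod_eq_0; auto.
 exfalso. assert (Hz : 0 < Cmod z ^ 2) by (assert (0 <= Cmod z) by apply Cmod_ge_0; nra).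
 generalize (Hall ((NQ n lam a + 1) / (2 * Cmod z ^ 2))).
 replace (2 * ((NQ n lam a + 1) / (2 * Cmod z ^ 2)) * Cmod z ^ 2) with (NQ n lam a + 1) by (field; lra). lra. Qed.

Lemma null_orth' n lam a b : negre n lam -> psd n lam -> NQ n lam a = 0 -> Qf n lam a b = 0%C.
Proof. intros H P Na. rewrite (Q_herm n lam b a H). rewrite (null_orth n lam b a H P Na).
 apply injective_projections; simpl; lra. Qed.

Lemma ReQ_bound n lam a b t : negre n lam -> psd n lam -> 0 < t ->
  2 * Re (Qf n lam a b) <= t * NQ n lam a + NQ n lam b / t.
Proof. intros H P Ht. generalize (P (vadd (vsc (RtoC t) a) (vsc (-1)%C b))).
 rewrite NQ_add, !NQ_sc by auto. rewrite Q_scl, Q_scr.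
 replace (Cconj (-1)%C) with (RtoC (-1)) by (apply injective_projections; simpl; lra).
 replace (RtoC t * (RtoC (-1) * Qf n lam a b))%C with (RtoC (-t) * Qf n lam a b)%C by (rewrite RtoC_opp; ring).
 rewrite Re_RtoC_mult. rewrite !Cmod_R. rewrite (Rabs_right t) by lra. replace (Rabs (-1)) with 1 by (unfold Rabs; destruct Rcase_abs; lra).
 intros Hp. apply Rmult_le_reg_l with t; auto. rewrite Rmult_plus_distr_l.
 replace (t * (NQ n lam b / t)) with (NQ n lam b) by (field; lra). nra. Qed.

Lemma tri n lam a b A B : negre n lam -> psd n lam -> 0 <= A -> 0 <= B ->
  NQ n lam a <= A * A -> NQ n lam b <= B * B -> NQ n lam (vadd a b) <= (A + B) * (A + B).
Proof. intros H P hA hB ha hb. rewrite NQ_add by auto.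
 assert (0 <= NQ n lam a) by apply P. assert (0 <= NQ n lam b) by apply P.
 destruct (Req_dec A 0) as [EA|EA].
 { subst. assert (E0 : NQ n lam a = 0) by lra. rewrite (null_orth' n lam a b H P E0). simpl. lra. }
 destruct (Req_dec B 0) as [EB|EB].
 { subst. assert (E0 : NQ n lam b = 0) by lra. rewrite (null_orth n lam a b H P E0). simpl. lra. }
 assert (Hb := ReQ_bound n lam a b (B / A) H P ltac:(apply Rdiv_lt_0_compat; lra)).
 assert (B / A * NQ n lam a <= B * A).
 { replace (B * A) with (B / A * (A * A)) by (field; lra). apply Rmult_le_compat_l; auto.
   apply Rlt_le, Rdiv_lt_0_compat; lra. }
 assert (NQ n lam b / (B / A) <= B * A).
 { replace (B * A) with ((B * B) / (B / A)) by (field; lra). unfold Rdiv. apply Rmult_le_compat_r; auto.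
   apply Rlt_le, Rinv_0_lt_compat, Rdiv_lt_0_compat; lra. }
 nra. Qed.

Lemma cs_comb X Y a b c d : 0 <= X -> 0 <= Y -> 0 <= a -> 0 <= b -> 0 <= c -> 0 <= d ->
  X * X <= a * b -> Y * Y <= c * d -> (X + Y) * (X + Y) <= (a + c) * (b + d).
Proof. intros. assert (X * Y <= (a * d + b * c) / 2).
 { destruct (Rle_dec (X * Y) ((a * d + b * c) / 2)) as [h|h]; auto. exfalso.
   assert (h1 : (a * d + b * c) / 2 < X * Y) by lra.
   assert (0 <= (a * d + b * c) / 2) by (assert (0 <= a*d) by nra; assert (0<=b*c) by nra; lra).
   assert (((a * d + b * c) / 2) * ((a * d + b * c) / 2) < (X * Y) * (X * Y)) by nra.
   assert ((X * Y) * (X * Y) <= (a * b) * (c * d)).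
   { replace ((X*Y)*(X*Y)) with ((X*X)*(Y*Y)) by ring. apply Rmult_le_compat; nra. }
   assert (E1 : (a*d+b*c)/2*((a*d+b*c)/2) - (a*b)*(c*d) = ((a*d-b*c)/2)*((a*d-b*c)/2)) by field.
   assert (0 <= ((a*d-b*c)/2)*((a*d-b*c)/2)) by apply Rle_0_sqr. lra. }
 nra. Qed.


Definition Kc (lam : nat -> C) k := rsum k (fun j => -2 * Re (lam j)).
Definition Sc (lam : nat -> C) k := rsum k (fun j => -2 * Re (lam j) * Kc lam j).
Definition ek (k : nat) : nat -> C := fun j => if Nat.eqb j k then 1%C else 0%C.

Definition Pk n lam M k :=
  (forall x, exists p, inV n k p /\ forall psi, inV n k psi -> Qf n lam (vsub x p) psi = 0%C) /\
  (forall u, inV n k u -> Cmod (csum n u) ^ 2 <= Kc lam k * NQ n lam u) /\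
  (forall u, inV n k u -> exists x, inV n k x /\ NQ n lam x <= M * M * NQ n lam u /\
       NQ n lam (vsub (Dv lam u) x) <= Sc lam k * NQ n lam u).

Lemma Kc_nonneg n lam k : negre n lam -> (k <= n)%nat -> 0 <= Kc lam k.
Proof. intros H. unfold Kc. induction k; simpl; intros hk. lra.
 assert (Re (lam k) < 0) by (apply H; lia). assert (0 <= rsum k (fun j => -2 * Re (lam j))) by (apply IHk; lia). lra. Qed.

Lemma Sc_nonneg n lam k : negre n lam -> (k <= n)%nat -> 0 <= Sc lam k.
Proof. intros H. unfold Sc. induction k; simpl; intros hk. lra.
 assert (Re (lam k) < 0) by (apply H; lia). assert (0 <= Kc lam k) by (apply (Kc_nonneg n); auto; lia).
 assert (0 <= rsum k (fun j => -2 * Re (lam j) * Kc lam j)) by (apply IHk; lia). nra. Qed.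

Lemma inV_mono n k a : inV n (S k) a -> inV n k a \/ True.
Proof. auto. Qed.
Lemma inV_S n k a : inV n k a -> inV n (S k) a.
Proof. intros H j hj. apply H; lia. Qed.
Lemma inV_add n k a b : inV n k a -> inV n k b -> inV n k (vadd a b).
Proof. intros Ha Hb j hj. unfold vadd. rewrite Ha, Hb by auto. ring. Qed.
Lemma inV_sub n k a b : inV n k a -> inV n k b -> inV n k (vsub a b).
Proof. intros Ha Hb j hj. unfold vsub. rewrite Ha, Hb by auto. ring. Qed.
Lemma inV_sc n k c a : inV n k a -> inV n k (vsc c a).
Proof. intros Ha j hj. unfold vsc. rewrite Ha by auto. ring. Qed.
Lemma inV_Dv n k lam a : inV n k a -> inV n k (Dv lam a).
Proof. intros Ha j hj. unfold Dv. rewrite Ha by auto. ring. Qed.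

Lemma ev_add n a b : csum n (vadd a b) = (csum n a + csum n b)%C.
Proof. apply csum_add. Qed.
Lemma ev_sc n c a : csum n (vsc c a) = (c * csum n a)%C.
Proof. unfold vsc. rewrite csum_mull. auto. Qed.

Lemma P0 n lam M : negre n lam -> Pk n lam M 0.
Proof. intros H. assert (Z : forall a, inV n 0 a -> NQ n lam a = 0).
 { intros a ha. unfold NQ. rewrite Q_zerol by auto. reflexivity. }
 split; [|split].
 - intros x. exists (fun _ => 0%C). split. intros j hj; auto. intros psi hpsi.
   rewrite Q_herm by auto. rewrite Q_zerol by auto. apply injective_projections; simpl; lra.
 - intros u hu. rewrite csum_zero by (intros; apply hu; lia). rewrite Cmod_0. unfold Kc; simpl. lra.
 - intros u hu. exists (fun _ => 0%C). split. intros j hj; auto. rewrite !Z; auto.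
   split; lra. apply inV_sub. apply inV_Dv; auto. intros j hj; auto. intros j hj; auto. Qed.

Lemma NQ_orth n lam a b : negre n lam -> Qf n lam a b = 0%C -> NQ n lam (vadd a b) = NQ n lam a + NQ n lam b.
Proof. intros H E. rewrite NQ_add by auto. rewrite E. simpl. lra. Qed.

Lemma Re_zconj (z : C) : Re (z * Cconj z)%C = Cmod z ^ 2.
Proof. rewrite Cmod2_alt. unfold Re, Im, Cconj; simpl. ring. Qed.

Lemma Nle_aux N A : 0 <= N -> 0 <= A -> N * N <= A * N -> N <= A.
Proof. intros. nra. Qed.

Lemma Pstep n lam M k : negre n lam -> psd n lam -> 0 <= M -> (forall j, (j<n)%nat -> Cmod (lam j) <= M) ->
  (k < n)%nat -> Pk n lam M k -> Pk n lam M (S k).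
Proof.
 intros H P HM HlM hk [Hproj [Hev Hdec]].
 destruct (Hproj (ek k)) as [p [Hp Horth]].
 set (phi := vsub (ek k) p).
 assert (F1 : forall psi, inV n k psi -> Qf n lam phi psi = 0%C) by exact Horth.
 assert (F1' : forall psi, inV n k psi -> Qf n lam psi phi = 0%C).
 { intros psi hpsi. rewrite Q_herm by auto. rewrite F1 by auto. apply injective_projections; simpl; lra. }
 assert (Fphi : inV n (S k) phi).
 { intros j hj. unfold phi, vsub, ek. replace (Nat.eqb j k) with false by (symmetry; apply Nat.eqb_neq; lia).
   rewrite Hp by lia. ring. }
 assert (Hsplit : forall u, inV n (S k) u -> exists w c, inV n k w /\ u = vadd w (vsc c phi)).
 { intros u hu. exists (vsub u (vsc (u k) phi)), (u k). split.
   - intros j hj. unfold vsub, vsc, phi, vsub, ek.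
     destruct (Nat.eq_dec j k) as [->|ne].
     + rewrite Nat.eqb_refl. rewrite (Hp k) by lia. ring.
     + replace (Nat.eqb j k) with false by (symmetry; apply Nat.eqb_neq; auto).
       rewrite hu by lia. rewrite (Hp j) by lia. ring.
   - extensionality j. unfold vadd, vsub, vsc. ring. }
 set (r := vsub (Dv lam phi) (vsc (lam k) phi)).
 assert (Fr : inV n k r).
 { intros j hj. unfold r, vsub, vsc, Dv. destruct (Nat.eq_dec j k) as [->|ne]. ring.
   rewrite Fphi by lia. ring. }
 assert (FDphi : Dv lam phi = vadd (vsc (lam k) phi) r).
 { extensionality j. unfold r, vadd, vsub, vsc, Dv. ring. }
 assert (FQD : forall psi, inV n k psi -> Qf n lam (Dv lam phi) psi = (- (csum n phi * Cconj (csum n psi)))%C).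
 { intros psi hpsi. rewrite <- (H2 n lam phi psi H). rewrite (F1 (Dv lam psi)) by (apply inV_Dv; auto). ring. }
 assert (Dlin : forall w c, Dv lam (vadd w (vsc c phi)) = vadd (Dv lam w) (vsc c (Dv lam phi))).
 { intros w c. extensionality j. unfold Dv, vadd, vsc. ring. }
 assert (KS : Kc lam (S k) = Kc lam k + -2 * Re (lam k)) by reflexivity.
 assert (SS : Sc lam (S k) = Sc lam k + -2 * Re (lam k) * Kc lam k) by reflexivity.
 assert (hlk : Re (lam k) < 0) by (apply H; auto).
 assert (hK : 0 <= Kc lam k) by (apply (Kc_nonneg n); auto; lia).
 assert (hS : 0 <= Sc lam k) by (apply (Sc_nonneg n); auto; lia).
 set (q := NQ n lam phi).
 assert (hq : 0 <= q) by apply P.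
 assert (NQwc : forall w c, inV n k w -> NQ n lam (vadd w (vsc c phi)) = NQ n lam w + Cmod c ^ 2 * q).
 { intros w c hw. rewrite NQ_orth by (auto; rewrite Q_scr, F1' by auto; ring). rewrite NQ_sc by auto. auto. }
 destruct (Req_dec q 0) as [q0|qpos].
 -
   assert (N1 : forall a, Qf n lam a phi = 0%C) by (intros; apply null_orth; auto).
   assert (N2 : forall a, Qf n lam phi a = 0%C) by (intros; apply null_orth'; auto).
   assert (Ev0 : csum n phi = 0%C).
   { generalize (H2 n lam phi phi H). rewrite N1, N2. intros E. apply Cmod_eq_0.
     apply (f_equal Re) in E. simpl in E. assert (E3 := Re_zconj (csum n phi)). unfold Re in E3. simpl in E3. assert (Cmod (csum n phi) ^ 2 = 0) by lra. assert (0 <= Cmod (csum n phi)) by apply Cmod_ge_0. nra. }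
   assert (ND : NQ n lam (Dv lam phi) = 0).
   { generalize (H2 n lam phi (Dv lam phi) H). rewrite N2, Ev0. intros E.
     unfold NQ. replace (Qf n lam (Dv lam phi) (Dv lam phi)) with (- (0 * Cconj (csum n (Dv lam phi))) - 0)%C
       by (rewrite <- E; ring). simpl. lra. }
   split; [|split].
   + intros x. destruct (Hproj x) as [px [hpx hox]]. exists px. split. apply inV_S; auto.
     intros psi hpsi. destruct (Hsplit psi hpsi) as [w [c [hw ->]]].
     rewrite Q_addr, Q_scr, hox, N1 by auto. ring.
   + intros u hu. destruct (Hsplit u hu) as [w [c [hw ->]]].
     rewrite ev_add, ev_sc, Ev0, NQwc, q0 by auto.
     replace (csum n w + c * 0)%C with (csum n w) by ring.
     assert (0 <= NQ n lam w) by apply P.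
     generalize (Hev w hw). rewrite KS. nra.
   + intros u hu. destruct (Hsplit u hu) as [w [c [hw ->]]].
     destruct (Hdec w hw) as [x [hx [h1 h2]]]. exists x. split. apply inV_S; auto.
     rewrite NQwc, q0 by auto. rewrite Rmult_0_r, Rplus_0_r. split; auto.
     replace (vsub (Dv lam (vadd w (vsc c phi))) x) with (vadd (vsub (Dv lam w) x) (vsc c (Dv lam phi))).
     2:{ rewrite Dlin. extensionality j. unfold vadd, vsub, vsc. ring. }
     rewrite NQ_orth by (auto; rewrite Q_scr, null_orth by auto; ring).
     rewrite NQ_sc, ND by auto. rewrite SS.
     assert (0 <= NQ n lam w) by apply P. assert (0 <= -2 * Re (lam k) * Kc lam k) by nra. nra.
 - assert (qp : 0 < q) by lra.
   assert (Qpp : Qf n lam phi phi = RtoC q) by (apply Q_diag; auto).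
   assert (qC : RtoC q <> 0%C) by (intros E; apply RtoC_inj in E; lra).
   assert (E1 : Qf n lam (Dv lam phi) phi = (lam k * RtoC q)%C).
   { rewrite FDphi, Q_addl, Q_scl, (F1' r Fr), Qpp. ring. }
   assert (EvPhi : Cmod (csum n phi) ^ 2 = -2 * Re (lam k) * q).
   { generalize (H2 n lam phi phi H). rewrite (Q_herm n lam (Dv lam phi) phi H), E1.
     intros E. apply (f_equal Re) in E.
     assert (E3 := Re_zconj (csum n phi)). destruct (lam k) as [l1 l2]. unfold Re in *. simpl in *. lra. }
   split; [|split].
   + intros x. destruct (Hproj x) as [px [hpx hox]].
     exists (vadd px (vsc (Qf n lam x phi / RtoC q)%C phi)). split.
     { apply inV_add. apply inV_S; auto. apply inV_sc; auto. }
     intros psi hpsi. destruct (Hsplit psi hpsi) as [w [c [hw ->]]].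
     replace (vsub x (vadd px (vsc (Qf n lam x phi / RtoC q)%C phi)))
       with (vsub (vsub x px) (vsc (Qf n lam x phi / RtoC q)%C phi))
       by (extensionality j; unfold vsub, vadd, vsc; ring).
     rewrite Q_subl, !Q_addr, !Q_scr, !Q_scl, hox, F1, Q_subl, (F1' px), Qpp by auto.
     field. auto.
   + intros u hu. destruct (Hsplit u hu) as [w [c [hw ->]]].
     rewrite ev_add, ev_sc, NQwc by auto.
     assert (T1 := Cmod_triangle (csum n w) (c * csum n phi)%C). rewrite Cmod_mult in T1.
     assert (hw1 := Hev w hw).
     assert (0 <= NQ n lam w) by apply P.
     assert (0 <= Cmod (csum n w)) by apply Cmod_ge_0.
     assert (0 <= Cmod c) by apply Cmod_ge_0.
     assert (0 <= Cmod (csum n phi)) by apply Cmod_ge_0.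
     assert (0 <= Cmod (csum n w + c * csum n phi)%C) by apply Cmod_ge_0.
     assert (CC := cs_comb (Cmod (csum n w)) (Cmod c * Cmod (csum n phi)) (Kc lam k) (NQ n lam w)
         (-2 * Re (lam k)) (Cmod c ^ 2 * q) ltac:(auto) ltac:(nra) ltac:(auto) ltac:(auto) ltac:(lra) ltac:(nra)
         ltac:(simpl in hw1; nra) ltac:(simpl in EvPhi; nra)).
     rewrite KS. simpl. nra.
   + intros u hu. destruct (Hsplit u hu) as [w [c [hw ->]]].
     destruct (Hdec w hw) as [x [hx [h1 h2]]].
     exists (vadd x (vsc (c * lam k)%C phi)). split.
     { apply inV_add. apply inV_S; auto. apply inV_sc; auto. }
     rewrite NQwc by auto.
     assert (0 <= NQ n lam w) by apply P.
     assert (0 <= Cmod c) by apply Cmod_ge_0.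
     assert (0 <= Cmod (lam k)) by apply Cmod_ge_0.
     assert (HMk : Cmod (lam k) <= M) by (apply HlM; auto).
     split.
     * rewrite NQ_orth by (auto; rewrite Q_scr, F1' by auto; ring).
       rewrite NQ_sc by auto. fold q. rewrite Cmod_mult.
       assert (Cmod c * Cmod (lam k) <= Cmod c * M) by (apply Rmult_le_compat_l; auto).
       assert (0 <= Cmod c * Cmod (lam k)) by nra.
       assert ((Cmod c * Cmod (lam k)) ^ 2 <= (Cmod c * M) ^ 2) by (simpl; nra).
       assert ((Cmod c * Cmod (lam k)) ^ 2 * q <= (Cmod c * M) ^ 2 * q) by nra.
       simpl in *. nra.
     * replace (vsub (Dv lam (vadd w (vsc c phi))) (vadd x (vsc (c * lam k)%C phi)))
         with (vadd (vsub (Dv lam w) x) (vsc c r)).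
       2:{ rewrite Dlin. extensionality j. unfold r, vadd, vsub, vsc, Dv. ring. }
       assert (Nr : NQ n lam r <= -2 * Re (lam k) * q * Kc lam k).
       { assert (Qrr : Qf n lam r r = (- (csum n phi * Cconj (csum n r)))%C).
         { unfold r at 1. rewrite Q_subl, Q_scl, FQD, F1 by auto. ring. }
         assert (hr := Hev r Fr).
         assert (0 <= NQ n lam r) by apply P.
         assert (B1 : NQ n lam r <= Cmod (csum n phi) * Cmod (csum n r)).
         { unfold NQ. rewrite Qrr. rewrite <- Cmod_conj with (c := csum n r). rewrite <- Cmod_mult, <- Cmod_opp.
           generalize (re_le_Cmod (- (csum n phi * Cconj (csum n r)))%C). unfold Rabs. destruct Rcase_abs; lra. }
         assert (0 <= Cmod (csum n phi)) by apply Cmod_ge_0.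
         assert (0 <= Cmod (csum n r)) by apply Cmod_ge_0.
         apply Nle_aux. auto. nra.
         assert (NQ n lam r * NQ n lam r <= (Cmod (csum n phi) * Cmod (csum n r)) ^ 2) by (simpl; nra).
         simpl in hr, EvPhi. simpl in H4. nra. }
       assert (0 <= NQ n lam r) by apply P.
       apply Rle_trans with ((sqrt (Sc lam k * NQ n lam w) + sqrt (-2 * Re (lam k) * Kc lam k * (Cmod c ^ 2 * q)))
                            * (sqrt (Sc lam k * NQ n lam w) + sqrt (-2 * Re (lam k) * Kc lam k * (Cmod c ^ 2 * q)))).
       { apply tri; auto. apply sqrt_pos. apply sqrt_pos.
         rewrite sqrt_sqrt by nra. auto.
         rewrite NQ_sc by auto. rewrite sqrt_sqrt. 2:{ apply Rmult_le_pos. nra. apply Rmult_le_pos; simpl; nra. }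
         assert (0 <= Cmod c ^ 2) by (simpl; nra). nra. }
       rewrite SS, NQwc by auto. apply cs_comb; try apply sqrt_pos; auto.
       all: try (rewrite sqrt_sqrt; [lra| ]).
       all: try (apply Rmult_le_pos; simpl; nra).
       all: try nra.
Qed.

Lemma Pall n lam M : negre n lam -> psd n lam -> 0 <= M -> (forall j, (j<n)%nat -> Cmod (lam j) <= M) ->
  forall k, (k <= n)%nat -> Pk n lam M k.
Proof. intros H P HM HlM k. induction k; intros hk. apply P0; auto.
 apply Pstep; auto. apply IHk; lia. Qed.

Lemma partB n lam M a : negre n lam -> psd n lam -> 0 <= M -> (forall j, (j<n)%nat -> Cmod (lam j) <= M) ->
  NQ n lam (Dv lam a) <= (M + sqrt (Sc lam n)) * (M + sqrt (Sc lam n)) * NQ n lam a.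
Proof. intros H P HM HlM.
 destruct (Pall n lam M H P HM HlM n (le_n n)) as [_ [_ Hdec]].
 destruct (Hdec a) as [x [_ [h1 h2]]]. intros j hj; lia.
 replace (Dv lam a) with (vadd x (vsub (Dv lam a) x)) by (extensionality j; unfold vadd, vsub; ring).
 assert (0 <= NQ n lam a) by apply P. assert (0 <= Sc lam n) by (apply (Sc_nonneg n); auto).
 apply Rle_trans with ((M * sqrt (NQ n lam a) + sqrt (Sc lam n) * sqrt (NQ n lam a)) *
    (M * sqrt (NQ n lam a) + sqrt (Sc lam n) * sqrt (NQ n lam a))).
 - apply tri; auto. apply Rmult_le_pos; auto; apply sqrt_pos. apply Rmult_le_pos; apply sqrt_pos.
   replace (M * sqrt (NQ n lam a) * (M * sqrt (NQ n lam a))) with (M * M * (sqrt (NQ n lam a) * sqrt (NQ n lam a))) by ring.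
   rewrite sqrt_sqrt; auto.
   replace (sqrt (Sc lam n) * sqrt (NQ n lam a) * (sqrt (Sc lam n) * sqrt (NQ n lam a))) with
     ((sqrt (Sc lam n) * sqrt (Sc lam n)) * (sqrt (NQ n lam a) * sqrt (NQ n lam a))) by ring.
   rewrite !sqrt_sqrt; auto.
 - replace ((M * sqrt (NQ n lam a) + sqrt (Sc lam n) * sqrt (NQ n lam a)) *
    (M * sqrt (NQ n lam a) + sqrt (Sc lam n) * sqrt (NQ n lam a))) with
    ((M + sqrt (Sc lam n)) * (M + sqrt (Sc lam n)) * (sqrt (NQ n lam a) * sqrt (NQ n lam a))) by ring.
   rewrite sqrt_sqrt; auto. lra. Qed.


Lemma rsum_ext n (f g : nat -> R) : (forall j, (j < n)%nat -> f j = g j) -> rsum n f = rsum n g.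
Proof. induction n; simpl; intros H; auto. rewrite IHn by (intros; apply H; lia). rewrite H by lia. auto. Qed.
Lemma rsum_plus n (f g : nat -> R) : rsum n (fun j => f j + g j) = rsum n f + rsum n g.
Proof. induction n; simpl. ring. rewrite IHn. ring. Qed.
Lemma rsum_scal n c (f : nat -> R) : c * rsum n f = rsum n (fun j => c * f j).
Proof. induction n; simpl. ring. rewrite <- IHn. ring. Qed.
Lemma rsum_zero n (f : nat -> R) : (forall j, (j < n)%nat -> f j = 0) -> rsum n f = 0.
Proof. induction n; simpl; intros H; auto. rewrite IHn by (intros; apply H; lia). rewrite H by lia. ring. Qed.
Lemma rsum_mul n (f g : nat -> R) : rsum n f * rsum n g = rsum n (fun j => rsum n (fun k => f j * g k)).
Proof. rewrite Rmult_comm, rsum_scal. apply rsum_ext; intros. rewrite Rmult_comm, rsum_scal. auto. Qed.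

Lemma rsum_derive n (f df : nat -> R -> R) t : (forall j, (j < n)%nat -> is_derive (f j) t (df j t)) ->
  is_derive (fun s => rsum n (fun j => f j s)) t (rsum n (fun j => df j t)).
Proof. induction n; simpl; intros H. apply is_derive_Reals, derivable_pt_lim_const.
 apply (is_derive_plus (fun s => rsum n (fun j => f j s)) (f n)). apply IHn; intros; apply H; lia. apply H; lia. Qed.

Lemma rsum_ex_derive n (f : nat -> R -> R) t : (forall j, (j < n)%nat -> ex_derive (f j) t) ->
  ex_derive (fun s => rsum n (fun j => f j s)) t.
Proof. induction n; simpl; intros H. apply ex_derive_const.
 apply (ex_derive_plus (fun s => rsum n (fun j => f j s)) (f n)). apply IHn; intros; apply H; lia. apply H; lia. Qed.

Definition trm p q al be t := exp (p * t) * (al * cos (q * t) + be * sin (q * t)).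
Definition anti p q al be t := trm p q ((p * al - q * be) / (p * p + q * q)) ((q * al + p * be) / (p * p + q * q)) t.

Lemma anti_derive p q al be t : p < 0 -> is_derive (anti p q al be) t (trm p q al be t).
Proof. intros hp. unfold anti, trm. auto_derive. auto.
 assert (p * p + q * q <> 0) by nra. field. auto. Qed.

Lemma trm_ex_derive p q al be t : ex_derive (trm p q al be) t.
Proof. unfold trm. auto_derive. auto. Qed.

Definition tz (f : R -> R) := forall eps, eps > 0 -> exists M, forall T, M <= T -> Rabs (f T) < eps.

Lemma tz_plus f g : tz f -> tz g -> tz (fun t => f t + g t).
Proof. intros hf hg eps he. destruct (hf (eps/2)) as [M1 h1]. lra. destruct (hg (eps/2)) as [M2 h2]. lra.
 exists (Rmax M1 M2). intros T hT. assert (A := h1 T ltac:(apply Rle_trans with (Rmax M1 M2); auto; apply Rmax_l)).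
 assert (B := h2 T ltac:(apply Rle_trans with (Rmax M1 M2); auto; apply Rmax_r)).
 eapply Rle_lt_trans. apply Rabs_triang. lra. Qed.

Lemma tz_rsum n (f : nat -> R -> R) : (forall j, (j < n)%nat -> tz (f j)) -> tz (fun t => rsum n (fun j => f j t)).
Proof. induction n; simpl; intros H. intros eps he. exists 0. intros. rewrite Rabs_R0. lra.
 apply (tz_plus (fun t => rsum n (fun j => f j t)) (f n)). apply IHn; intros; apply H; lia. apply H; lia. Qed.

Lemma tz_trm p q al be : p < 0 -> tz (trm p q al be).
Proof. intros hp eps he. set (K := Rabs al + Rabs be + 1).
 assert (hK : 0 < K) by (unfold K; generalize (Rabs_pos al) (Rabs_pos be); lra).
 exists (ln (eps / K) / p). intros T hT.
 assert (E : exp (p * T) <= eps / K).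
 { rewrite <- (exp_ln (eps / K)) by (apply Rdiv_lt_0_compat; lra).
   assert (p * T <= ln (eps / K)).
   { apply Rmult_le_compat_neg_l with (r := p) in hT; [|lra].
     replace (p * (ln (eps / K) / p)) with (ln (eps / K)) in hT by (field; lra). lra. }
   destruct (Rle_lt_or_eq_dec _ _ H) as [h|h]. left; apply exp_increasing; auto. rewrite h; lra. }
 unfold trm. rewrite Rabs_mult, Rabs_right by (left; apply exp_pos).
 assert (Rabs (al * cos (q * T) + be * sin (q * T)) <= Rabs al + Rabs be).
 { eapply Rle_trans. apply Rabs_triang. rewrite !Rabs_mult.
   generalize (COS_bound (q*T)) (SIN_bound (q*T)). intros [c1 c2] [s1 s2].
   assert (Rabs (cos (q * T)) <= 1) by (apply Rabs_le; lra).
   assert (Rabs (sin (q * T)) <= 1) by (apply Rabs_le; lra).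
   generalize (Rabs_pos al) (Rabs_pos be) (Rabs_pos (cos (q*T))) (Rabs_pos (sin (q*T))). nra. }
 assert (0 < exp (p * T)) by apply exp_pos.
 apply Rle_lt_trans with (exp (p * T) * (Rabs al + Rabs be)). apply Rmult_le_compat_l; lra.
 apply Rlt_le_trans with (exp (p * T) * K). apply Rmult_lt_compat_l; auto. unfold K; lra.
 apply Rle_trans with (eps / K * K). apply Rmult_le_compat_r; lra. right; field; lra. Qed.


Definition hf n (ar ai lr li : nat -> R) t :=
  rsum n (fun j => rsum n (fun k => trm (lr j + lr k) (li j - li k)
     (ar j * ar k + ai j * ai k) (ar j * ai k - ai j * ar k) t)).
Definition Ff n (ar ai lr li : nat -> R) t :=
  rsum n (fun j => rsum n (fun k => anti (lr j + lr k) (li j - li k)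
     (ar j * ar k + ai j * ai k) (ar j * ai k - ai j * ar k) t)).

Lemma rsum_opp n (f : nat -> R) : - rsum n f = rsum n (fun j => - f j).
Proof. induction n; simpl. ring. rewrite <- IHn. ring. Qed.

Lemma integrand n ar ai lr li t :
  expsum_re n ar ai lr li t * expsum_re n ar ai lr li t + expsum_im n ar ai lr li t * expsum_im n ar ai lr li t
  = hf n ar ai lr li t.
Proof. unfold expsum_re, expsum_im, hf. rewrite !rsum_mul, <- rsum_plus. apply rsum_ext; intros j hj.
 rewrite <- rsum_plus. apply rsum_ext; intros k hk. unfold trm.
 replace ((li j - li k) * t) with (li j * t - li k * t) by ring. rewrite cos_minus, sin_minus.
 replace ((lr j + lr k) * t) with (lr j * t + lr k * t) by ring. rewrite exp_plus. ring. Qed.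

Lemma value n ar ai lr li : (forall j, (j < n)%nat -> lr j < 0) ->
  NQ n (fun j => (lr j, li j)) (fun j => (ar j, ai j)) = - Ff n ar ai lr li 0.
Proof. intros H. unfold NQ, Qf, Ff. rewrite csum_re, rsum_opp. apply rsum_ext; intros j hj.
 rewrite csum_re, rsum_opp. apply rsum_ext; intros k hk.
 assert (lr j + lr k < 0) by (generalize (H j hj) (H k hk); lra).
 unfold anti, trm, gk. rewrite Rmult_0_r, exp_0, !Rmult_0_r, cos_0, sin_0.
 unfold Re, Cinv, Cmult, Cconj, Copp, Cplus; simpl.
 assert ((lr j + lr k) * (lr j + lr k) + (li j + - li k) * (li j + - li k) <> 0) by (assert (0 < (lr j + lr k) * (lr j + lr k)) by nra; assert (0 <= (li j + - li k) * (li j + - li k)) by apply Rle_0_sqr; lra).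
 assert ((lr j + lr k) * (lr j + lr k) + (li j - li k) * (li j - li k) <> 0) by (assert (0 < (lr j + lr k) * (lr j + lr k)) by nra; assert (0 <= (li j - li k) * (li j - li k)) by apply Rle_0_sqr; lra).
 field; auto. Qed.

Lemma partA n ar ai lr li : (forall j, (j < n)%nat -> lr j < 0) ->
  improper_int_0_inf (fun t => expsum_re n ar ai lr li t * expsum_re n ar ai lr li t
                             + expsum_im n ar ai lr li t * expsum_im n ar ai lr li t)
    (NQ n (fun j => (lr j, li j)) (fun j => (ar j, ai j))).
Proof. intros H.
 assert (neg : forall j k, (j < n)%nat -> (k < n)%nat -> lr j + lr k < 0).
 { intros j k hj hk. generalize (H j hj) (H k hk). lra. }
 assert (Fd : forall t, is_derive (Ff n ar ai lr li) t (hf n ar ai lr li t)).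
 { intros t. unfold Ff, hf. apply (rsum_derive n (fun j s => rsum n (fun k => anti (lr j + lr k) (li j - li k)
     (ar j * ar k + ai j * ai k) (ar j * ai k - ai j * ar k) s))
     (fun j s => rsum n (fun k => trm (lr j + lr k) (li j - li k)
     (ar j * ar k + ai j * ai k) (ar j * ai k - ai j * ar k) s))).
   intros j hj. apply (rsum_derive n (fun k s => anti (lr j + lr k) (li j - li k)
     (ar j * ar k + ai j * ai k) (ar j * ai k - ai j * ar k) s)
     (fun k s => trm (lr j + lr k) (li j - li k)
     (ar j * ar k + ai j * ai k) (ar j * ai k - ai j * ar k) s)).
   intros k hk. apply anti_derive. auto. }
 assert (Hc : forall t, continuous (hf n ar ai lr li) t).
 { intros t. apply (ex_derive_continuous (K:=R_AbsRing) (V:=R_NormedModule) (hf n ar ai lr li)). unfold hf.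
   apply (rsum_ex_derive n (fun j s => rsum n (fun k => trm (lr j + lr k) (li j - li k)
     (ar j * ar k + ai j * ai k) (ar j * ai k - ai j * ar k) s))).
   intros j hj. apply (rsum_ex_derive n (fun k s => trm (lr j + lr k) (li j - li k)
     (ar j * ar k + ai j * ai k) (ar j * ai k - ai j * ar k) s)).
   intros. apply trm_ex_derive. }
 assert (Rint : forall T, is_RInt (fun t => expsum_re n ar ai lr li t * expsum_re n ar ai lr li t
                             + expsum_im n ar ai lr li t * expsum_im n ar ai lr li t) 0 T
                   (Ff n ar ai lr li T - Ff n ar ai lr li 0)).
 { intros T. apply is_RInt_ext with (hf n ar ai lr li).
   intros; rewrite integrand; auto.
   apply (is_RInt_derive (Ff n ar ai lr li) (hf n ar ai lr li)).
   intros; apply Fd. intros; apply Hc. }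
 assert (Tz : tz (Ff n ar ai lr li)).
 { unfold Ff. apply (tz_rsum n (fun j s => rsum n (fun k => anti (lr j + lr k) (li j - li k)
     (ar j * ar k + ai j * ai k) (ar j * ai k - ai j * ar k) s))).
   intros j hj. apply (tz_rsum n (fun k s => anti (lr j + lr k) (li j - li k)
     (ar j * ar k + ai j * ai k) (ar j * ai k - ai j * ar k) s)).
   intros k hk. unfold anti. apply tz_trm. auto. }
 rewrite value by auto.
 split.
 - intros T hT. constructor. apply ex_RInt_Reals_0. eexists; apply Rint.
 - intros eps he. destruct (Tz eps he) as [M hM]. exists M. intros T pr hT.
   rewrite <- RInt_Reals. rewrite (is_RInt_unique _ _ _ _ (Rint T)).
   replace (Ff n ar ai lr li T - Ff n ar ai lr li 0 - - Ff n ar ai lr li 0) with (Ff n ar ai lr li T) by ring.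
   apply hM; auto. Qed.

Lemma improper_nonneg h I : (forall t, 0 <= h t) -> improper_int_0_inf h I -> 0 <= I.
Proof. intros Hh [Hi Hl]. destruct (Rle_dec 0 I) as [ok|ko]; auto. exfalso.
 destruct (Hl (- I) ltac:(lra)) as [M hM].
 set (T := Rmax M 0). assert (hT0 : 0 <= T) by apply Rmax_r.
 destruct (Hi T hT0) as [pr]. assert (A := hM T pr (Rmax_l M 0)).
 assert (0 <= RiemannInt pr).
 { rewrite <- RInt_Reals. apply RInt_ge_0; auto. apply ex_RInt_Reals_1; auto. }
 unfold Rabs in A. destruct Rcase_abs in A; lra. Qed.


Lemma rmax_ge n (g : nat -> R) j : (j < n)%nat -> g j <= rmax n g.
Proof. induction n; intros hj. lia. destruct n. assert (j = 0%nat) by lia. subst. simpl. lra.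
 change (rmax (S (S n)) g) with (Rmax (rmax (S n) g) (g (S n))).
 destruct (Nat.eq_dec j (S n)) as [->|ne]. apply Rmax_r.
 eapply Rle_trans. apply IHn; lia. apply Rmax_l. Qed.

Lemma tri_sum n (x : nat -> R) :
  rsum n (fun j => x j * rsum n (fun k => if Nat.ltb j k then x k else 0)) = rsum n (fun k => x k * rsum k x).
Proof. induction n. reflexivity.
 simpl. rewrite <- IHn.
 rewrite (rsum_ext n (fun j => x j * (rsum n (fun k => if Nat.ltb j k then x k else 0) + (if Nat.ltb j n then x n else 0)))
    (fun j => x j * rsum n (fun k => if Nat.ltb j k then x k else 0) + x n * x j)).
 2:{ intros j hj. replace (Nat.ltb j n) with true by (symmetry; apply Nat.ltb_lt; auto). ring. }
 rewrite rsum_plus. rewrite <- rsum_scal.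
 rewrite (rsum_zero n (fun k => if Nat.ltb n k then x k else 0)).
 2:{ intros k hk. replace (Nat.ltb n k) with false by (symmetry; apply Nat.ltb_ge; lia). auto. }
 rewrite Nat.ltb_irrefl. ring. Qed.

Lemma deriv_re n ar ai lr li t :
  derivable_pt_lim (expsum_re n ar ai lr li) t
    (expsum_re n (fun j => lr j * ar j - li j * ai j) (fun j => lr j * ai j + li j * ar j) lr li t).
Proof. apply is_derive_Reals. unfold expsum_re.
 apply (rsum_derive n (fun j s => exp (lr j * s) * (ar j * cos (li j * s) - ai j * sin (li j * s)))
   (fun j s => exp (lr j * s) * ((lr j * ar j - li j * ai j) * cos (li j * s) - (lr j * ai j + li j * ar j) * sin (li j * s)))).
 intros j hj. auto_derive. auto. ring. Qed.

Lemma deriv_im n ar ai lr li t :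
  derivable_pt_lim (expsum_im n ar ai lr li) t
    (expsum_im n (fun j => lr j * ar j - li j * ai j) (fun j => lr j * ai j + li j * ar j) lr li t).
Proof. apply is_derive_Reals. unfold expsum_im.
 apply (rsum_derive n (fun j s => exp (lr j * s) * (ar j * sin (li j * s) + ai j * cos (li j * s)))
   (fun j s => exp (lr j * s) * ((lr j * ar j - li j * ai j) * sin (li j * s) + (lr j * ai j + li j * ar j) * cos (li j * s)))).
 intros j hj. auto_derive. auto. ring. Qed.

Theorem theorem11p1 (n : nat) (ar ai lr li : nat -> R) :
  (1 <= n)%nat ->
  (forall j, (j < n)%nat -> lr j < 0) ->
  forall dr di : R -> R,
  (forall t, derivable_pt_lim (expsum_re n ar ai lr li) t (dr t)) ->
  (forall t, derivable_pt_lim (expsum_im n ar ai lr li) t (di t)) ->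
  exists Nf Nd : R,
    L2norm_0_inf (expsum_re n ar ai lr li) (expsum_im n ar ai lr li) Nf /\
    L2norm_0_inf dr di Nd /\
    Nd <= (1/2 + rmax n (fun j => cmod (lr j + 1/2) (li j))
           + 2 * sqrt (rsum n (fun j => lr j *
                 rsum n (fun k => if Nat.ltb j k then lr k else 0)))) * Nf.
Proof.
 intros hn Hneg dr di Hdr Hdi.
 set (lam := fun j => (lr j, li j) : C).
 set (a := fun j => (ar j, ai j) : C).
 set (br := fun j => lr j * ar j - li j * ai j).
 set (bi := fun j => lr j * ai j + li j * ar j).
 assert (Edr : dr = expsum_re n br bi lr li).
 { extensionality t. apply (uniqueness_limite (expsum_re n ar ai lr li) t); auto. apply deriv_re. }
 assert (Edi : di = expsum_im n br bi lr li).
 { extensionality t. apply (uniqueness_limite (expsum_im n ar ai lr li) t); auto. apply deriv_im. }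
 assert (HN : negre n lam) by (intros j hj; apply Hneg; auto).
 assert (HP : psd n lam).
 { intros a'. assert (E : a' = (fun j => (fst (a' j), snd (a' j)))).
   { extensionality j. destruct (a' j); auto. }
   rewrite E. eapply improper_nonneg.
   2: apply (partA n (fun j => fst (a' j)) (fun j => snd (a' j)) lr li Hneg).
   intros t. simpl. nra. }
 set (g := fun j => cmod (lr j + 1/2) (li j)).
 set (M := 1/2 + rmax n g).
 assert (HM : 0 <= M).
 { unfold M. assert (g 0%nat <= rmax n g) by (apply rmax_ge; lia).
   assert (0 <= g 0%nat) by (unfold g, cmod; apply sqrt_pos). lra. }
 assert (HlM : forall j, (j < n)%nat -> Cmod (lam j) <= M).
 { intros j hj. assert (g j <= rmax n g) by (apply rmax_ge; auto).
   replace (lam j) with (lam j + RtoC (1/2) + RtoC (-(1/2)))%C by (unfold lam; apply injective_projections; simpl; ring).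
   eapply Rle_trans. apply Cmod_triangle. rewrite Cmod_R.
   replace (Cmod (lam j + RtoC (1/2))%C) with (g j).
   2:{ unfold g, cmod, Cmod, lam. simpl. f_equal. ring. }
   replace (Rabs (- (1/2))) with (1/2) by (unfold Rabs; destruct Rcase_abs; lra). unfold M. lra. }
 assert (HB := partB n lam M a HN HP HM HlM).
 assert (ESc : Sc lam n = 4 * rsum n (fun j => lr j * rsum n (fun k => if Nat.ltb j k then lr k else 0))).
 { rewrite tri_sum. unfold Sc, Kc. rewrite rsum_scal. apply rsum_ext; intros j hj.
   unfold lam, Re; simpl. rewrite <- (rsum_scal j (-2)). ring. }
 exists (sqrt (NQ n lam a)), (sqrt (NQ n lam (Dv lam a))).
 split; [|split].
 - exists (NQ n lam a). split; auto. apply partA; auto.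
 - rewrite Edr, Edi. exists (NQ n lam (Dv lam a)). split; auto.
   replace (Dv lam a) with (fun j => (br j, bi j) : C) by (extensionality j; reflexivity).
   apply partA; auto.
 - set (T := rsum n (fun j => lr j * rsum n (fun k => if Nat.ltb j k then lr k else 0))).
   fold T in ESc.
   assert (hT : 0 <= T) by (assert (0 <= Sc lam n) by (apply (Sc_nonneg n); auto); lra).
   assert (sqrt (Sc lam n) = 2 * sqrt T).
   { rewrite ESc, sqrt_mult by lra. replace 4 with (2 * 2) by ring. rewrite sqrt_square by lra. auto. }
   fold g. fold M. rewrite <- H.
   assert (0 <= NQ n lam a) by apply HP.
   assert (0 <= M + sqrt (Sc lam n)) by (generalize (sqrt_pos (Sc lam n)); lra).
   rewrite <- (sqrt_square (M + sqrt (Sc lam n))) by auto.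
   rewrite <- sqrt_mult; [ | apply Rmult_le_pos; auto | auto]. apply sqrt_le_1_alt. auto. Qed.
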